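(* Let $G$ be a finite abelian group, $g\in G$ with $\operatorname{ord}(g)=6$, and $G_0=\{0,g,3g,-g\}$. Then $\mathcal L(G_0)\subset\mathcal L(C_2^5)$.
   Context: $C_2^r$ denotes an elementary abelian $2$-group of rank $r$. For a subset $G_0$ of a finite abelian group $G$, a sequence over $G_0$ is an element of the free abelian monoid $\mathcal F(G_0)$ with basis $G_0$ (a finite unordered list of elements of $G_0$, repetitions allowed). $\mathcal B(G_0)$ is the monoid of zero-sum sequences over $G_0$ (including the empty sequence). An atom is a minimal zero-sum sequence, i.e. a nonempty zero-sum sequence that is not a product of two nonempty zero-sum sequences. For $B\in\mathcal B(G_0)$, $\mathsf L(B)=\{k\in\mathbb N_0: B \text{ is a product of } k \text{ atoms of } \mathcal B(G_0)\}$, and $\mathcal L(G_0)=\{\mathsf L(B):B\in\mathcal B(G_0)\}$; $\mathcal L(G)$ is the case $G_0=G$. *)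

(* Defs.v *)
From mathcomp Require Import all_boot all_algebra.
Set Implicit Arguments. Unset Strict Implicit. Unset Printing Implicit Defensive.
Import GRing.Theory.
Local Open Scope ring_scope.

(* Sequences over a finite abelian group G, i.e. elements of the free abelian
   monoid F(G), represented by their multiplicity functions G -> nat. *)
Definition fseq (G : finType) := {ffun G -> nat}.

Definition supp_in (G : finType) (G0 : {set G}) (S : fseq G) : Prop :=
  forall x, x \notin G0 -> S x = 0%N.

Definition fs_len (G : finType) (S : fseq G) : nat := (\sum_(x : G) S x)%N.

Definition fs_mul (G : finType) (S T : fseq G) : fseq G := [ffun x => (S x + T x)%N].

Definition fs_one (G : finType) : fseq G := [ffun=> 0%N].

Definition fs_sigma (G : finZmodType) (S : fseq G) : G := \sum_(x : G) x *+ S x.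

Definition zero_sum_over (G : finZmodType) (G0 : {set G}) (S : fseq G) : Prop :=
  supp_in G0 S /\ fs_sigma S = 0.

Definition atom_over (G : finZmodType) (G0 : {set G}) (A : fseq G) : Prop :=
  [/\ zero_sum_over G0 A, (0 < fs_len A)%N &
      forall U V, zero_sum_over G0 U -> zero_sum_over G0 V -> A = fs_mul U V ->
        fs_len U = 0%N \/ fs_len V = 0%N].

Definition lengths (G : finZmodType) (G0 : {set G}) (B : fseq G) (k : nat) : Prop :=
  exists As : seq (fseq G),
    [/\ size As = k, (forall A, A \in As -> atom_over G0 A) &
        B = foldr (@fs_mul G) (@fs_one G) As].

Definition in_system_of_lengths (G : finZmodType) (G0 : {set G}) (L : nat -> Prop) : Prop :=
  exists B, zero_sum_over G0 B /\ forall k, L k <-> lengths G0 B k.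

Definition system_subset (G H : finZmodType) (G0 : {set G}) (H0 : {set H}) : Prop :=
  forall L : nat -> Prop, in_system_of_lengths G0 L -> in_system_of_lengths H0 L.

Definition has_order (G : zmodType) (g : G) (n : nat) : Prop :=
  [/\ (0 < n)%N, g *+ n = 0 & forall k, (0 < k < n)%N -> g *+ k != 0].

Definition C2 (r : nat) : finZmodType := 'rV['F_2]_r.

(* Main.v *)
Require Import Defs.
From mathcomp Require Import all_boot all_algebra.
From mathcomp Require Import zify ring.
Set Implicit Arguments. Unset Strict Implicit. Unset Printing Implicit Defensive.
Import GRing.Theory.

Definition ArLs (n0 d T k : nat) : Prop := exists t, t <= T /\ k = n0 + d * t.

Definition ArP (K a b c k : nat) : Prop := exists c1 c2 c3 c4 c5 c6 c7 : nat,
  [/\ K = c1, a = 6 * c2 + c4 + 3 * c6, b = 2 * c5 + c6 + c7, c = 6 * c3 + c4 + 3 * c7 &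
      k = c1 + c2 + c3 + c4 + c5 + c6 + c7].

Definition ArQ (K p q r k : nat) : Prop := exists z c1 c2 c3 c4 c5 c6 c7 al be ga : nat,
  [/\ K = z, p = 2 * c1 + al + be, p = 2 * c2 + al + be, p = 2 * c3 + al + be &
      q = 2 * c4 + al + ga] /\
  [/\ q = 2 * c5 + al + ga, q = 2 * c6 + al + ga, r = 2 * c7 + be + ga &
      k = z + c1 + c2 + c3 + c4 + c5 + c6 + c7 + al + be + ga].

Lemma P_b0 K a c k : 6 %| a + 5 * c ->
  ArP K a 0 c k <-> ArLs (K + (a + c + 4 * (a %% 6)) %/ 6) 4 ((minn a c - a %% 6) %/ 6) k.
Proof.
move=> hd; split.
  move=> [c1 [c2 [c3 [c4 [c5 [c6 [c7 [e1 e2 e3 e4 ->]]]]]]]].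
  have [h5 [h6 h7]] : c5 = 0 /\ c6 = 0 /\ c7 = 0 by lia.
  subst; exists ((c4 - (6 * c2 + c4) %% 6) %/ 6); split; lia.
move=> [t [ht ->]].
pose w := a %% 6 + 6 * t.
exists K, ((a - w) %/ 6), ((c - w) %/ 6), w, 0, 0, 0; rewrite /w; split; lia.
Qed.

Lemma P_b1 K a b c k : 0 < b -> 6 %| a + 3 * b + 5 * c ->
  ArP K a b c k <-> ArLs (K + (a + c + 3 * b + 4 * (a %% 3)) %/ 6) 2 ((minn a c - a %% 3) %/ 3) k.
Proof.
move=> hb hd; split.
  move=> [c1 [c2 [c3 [c4 [c5 [c6 [c7 [e1 e2 e3 e4 ->]]]]]]]].
  exists ((c4 - a %% 3) %/ 3); split; lia.
move=> [t [ht ->]].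
have [r hr] : exists r, r = a %% 3 by exists (a %% 3).
have [A hA] : exists A, a = r + 3 * t + 3 * A by exists ((a - r - 3 * t) %/ 3); lia.
have [C hC] : exists C, c = r + 3 * t + 3 * C by exists ((c - r - 3 * t) %/ 3); lia.
have [y [u hy]] : exists y u, A = 2 * u + y /\ y < 2 by exists (A %% 2), (A %/ 2); lia.
have [z [v hz]] : exists z v, C = 2 * v + z /\ z < 2 by exists (C %% 2), (C %/ 2); lia.
have [x hx] : exists x, b = 2 * x + y + z by exists ((b - y - z) %/ 2); lia.
exists K, u, v, (r + 3 * t), x, y, z; split; lia.
Qed.

Lemma Q_r0 K T k : ArQ K (2 * T) (2 * T) 0 k <-> ArLs (K + 2 * T) 4 T k.
Proof.
split.
  move=> [z [c1 [c2 [c3 [c4 [c5 [c6 [c7 [al [be [ga [[e0 e1 e2 e3 e4] [e5 e6 e7 ->]]]]]]]]]]]]].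
  exists (T - al %/ 2); split; lia.
move=> [t [ht ->]].
exists K, t, t, t, t, t, t, 0, (2 * (T - t)), 0, 0; split; split; lia.
Qed.

Lemma Q_r2 K T k : ArQ K (T + T %% 2) (T - T %% 2) 2 k <-> ArLs (K + T + 1) 2 T k.
Proof.
split.
  move=> [z [c1 [c2 [c3 [c4 [c5 [c6 [c7 [al [be [ga [[e0 e1 e2 e3 e4] [e5 e6 e7 ->]]]]]]]]]]]]].
  exists (T - (2 * al + be + ga) %/ 2); split; lia.
move=> [t [ht ->]].
have [m hm] : exists m, m = T - t by exists (T - t).
have [[i hi]|[i hi]] : (exists i, m = 2 * i) \/ (exists i, m = 2 * i + 1).
  by case: (boolP (odd m)) => h; [right; exists m./2 | left; exists m./2]; lia.
  exists K, ((T + T %% 2 - m) %/ 2), ((T + T %% 2 - m) %/ 2), ((T + T %% 2 - m) %/ 2),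
    ((T - T %% 2 - m) %/ 2), ((T - T %% 2 - m) %/ 2), ((T - T %% 2 - m) %/ 2), 1, m, 0, 0.
  split; split; lia.
exists K, ((T + T %% 2 - m - 1) %/ 2), ((T + T %% 2 - m - 1) %/ 2), ((T + T %% 2 - m - 1) %/ 2),
  ((T - T %% 2 - m + 1) %/ 2), ((T - T %% 2 - m + 1) %/ 2), ((T - T %% 2 - m + 1) %/ 2), 0,
  (m - 1), 2, 0.
split; split; lia.
Qed.

Local Open Scope ring_scope.

Section Gen.
Variable G : finZmodType.
Implicit Types (S T A B D : fseq G) (s : seq G).

Lemma fs_mulE S T x : fs_mul S T x = (S x + T x)%N.
Proof. by rewrite ffunE. Qed.

Lemma fs_oneE x : fs_one G x = 0%N.
Proof. by rewrite ffunE. Qed.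

Lemma foldr_fsE As x :
  foldr (@fs_mul G) (@fs_one G) As x = sumn [seq A x | A <- As].
Proof. by elim: As => [|A As IH] /=; rewrite ffunE //= IH. Qed.

Lemma sigma_mul S T : fs_sigma (fs_mul S T) = fs_sigma S + fs_sigma T.
Proof.
rewrite /fs_sigma -big_split; apply: eq_bigr => x _; by rewrite ffunE mulrnDr.
Qed.

Lemma len_mul S T : fs_len (fs_mul S T) = (fs_len S + fs_len T)%N.
Proof.
rewrite /fs_len -big_split; apply: eq_bigr => x _; by rewrite ffunE.
Qed.

Lemma len_eq0 S : fs_len S = 0%N -> forall x, S x = 0%N.
Proof.
move=> h x; apply/eqP; move/eqP: h; rewrite /fs_len sum_nat_eq0 => /forallP.
by move/(_ x)/implyP/(_ isT).
Qed.

Lemma le_len S x : (S x <= fs_len S)%N.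
Proof. by rewrite /fs_len (bigD1 x) //= leq_addr. Qed.

Lemma atom_sub G0 A D :
  atom_over G0 A -> zero_sum_over G0 D -> (0 < fs_len D)%N ->
  (forall x, D x <= A x)%N -> A = D.
Proof.
move=> [[sA zA] lA mA] [sD zD] lD le.
pose E : fseq G := [ffun x => (A x - D x)%N].
have AE : A = fs_mul D E by apply/ffunP => x; rewrite !ffunE subnKC.
have zE : zero_sum_over G0 E.
  split; first by move=> x /sA; rewrite ffunE => ->.
  by move: zA; rewrite AE sigma_mul zD add0r.
have [|] := mA D E (conj sD zD) zE AE; first by move=> h; rewrite h in lD.
move/len_eq0 => h; apply/ffunP => x; apply/eqP; rewrite eqn_leq le andbT.
by move: (h x); rewrite ffunE => /eqP; rewrite subn_eq0.
Qed.

Definition pt (a : G) (n : nat) : fseq G := [ffun x => if x == a then n else 0%N].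

Fixpoint mk0 s (d : seq nat) : fseq G :=
  match s, d with
  | a :: s', n :: d' => fs_mul (pt a n) (mk0 s' d')
  | _, _ => fs_one G
  end.

Lemma mk0_out s d x : x \notin s -> mk0 s d x = 0%N.
Proof.
elim: s d => [|a s IH] [|n d] /=; rewrite ?fs_oneE // inE negb_or.
by move=> /andP[xa xs]; rewrite fs_mulE ffunE (negbTE xa) IH.
Qed.

Lemma mk0_in s d : uniq s -> size d = size s -> map (mk0 s d) s = d.
Proof.
elim: s d => [|a s IH] [|n d] //= /andP[nas us] [sd].
rewrite fs_mulE ffunE eqxx mk0_out // addn0; congr (_ :: _).
rewrite -{2}(IH d us sd); apply/eq_in_map => x xs.
rewrite fs_mulE ffunE; case: eqP => [xa|]; last by rewrite add0n.
by move: nas; rewrite -xa xs.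
Qed.

Definition mk s d : fseq G := locked (mk0 s d).
Lemma mkE s d : mk s d = mk0 s d. Proof. by rewrite /mk -lock. Qed.
Lemma mk_out s d x : x \notin s -> mk s d x = 0%N.
Proof. by rewrite mkE; apply: mk0_out. Qed.
Lemma mk_in s d : uniq s -> size d = size s -> map (mk s d) s = d.
Proof. by rewrite mkE; apply: mk0_in. Qed.

Lemma supp_mk s d : supp_in [set x in s] (mk s d).
Proof. by move=> x; rewrite inE => /mk_out ->. Qed.

Lemma sigma_pt a n : fs_sigma (pt a n) = a *+ n.
Proof.
rewrite /fs_sigma (bigD1 a) //= ffunE eqxx big1 ?addr0 // => x /negbTE xa.
by rewrite ffunE xa.
Qed.

Lemma len_pt a n : fs_len (pt a n) = n.
Proof.
rewrite /fs_len (bigD1 a) //= ffunE eqxx big1 ?addn0 // => x /negbTE xa.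
by rewrite ffunE xa.
Qed.

Lemma sigma_one : fs_sigma (fs_one G) = 0.
Proof. by rewrite /fs_sigma big1 // => x _; rewrite ffunE. Qed.

Lemma len_one : fs_len (fs_one G) = 0%N.
Proof. by rewrite /fs_len big1 // => x _; rewrite ffunE. Qed.

Lemma sigma_mk s d : fs_sigma (mk s d) =
  foldr (fun p acc => p.1 *+ p.2 + acc) 0 (zip s d).
Proof.
rewrite mkE; elim: s d => [|a s IH] [|n d] //=; rewrite ?sigma_one //.
by rewrite sigma_mul sigma_pt IH.
Qed.

Lemma len_mk s d : size d = size s -> fs_len (mk s d) = sumn d.
Proof.
rewrite mkE; elim: s d => [|a s IH] [|n d] //=; rewrite ?len_one // => [[sd]].
by rewrite len_mul len_pt IH.
Qed.

Lemma supp_ext s S T : supp_in [set x in s] S -> supp_in [set x in s] T ->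
  map S s = map T s -> S = T.
Proof.
move=> sS sT e; apply/ffunP => x; case: (boolP (x \in s)) => xs.
  have := congr1 (fun l => nth 0%N l (index x s)) e => /=.
  by rewrite !(nth_map x) ?index_mem // nth_index.
by rewrite sS ?sT // inE.
Qed.


Lemma le_foldr As A x : A \in As ->
  (A x <= foldr (@fs_mul G) (@fs_one G) As x)%N.
Proof.
rewrite foldr_fsE; elim: As => [|C As IH] //=; rewrite inE => /orP[/eqP->|h].
  exact: leq_addr.
by rewrite (leq_trans (IH h)) // leq_addl.
Qed.

Lemma atom_setT H0 A : supp_in H0 A ->
  atom_over [set: G] A <-> atom_over H0 A.
Proof.
move=> sA; split.
  move=> [[_ zA] lA mA]; split => //.
  move=> U V [_ zU] [_ zV] e; apply: mA e; split => //; by move=> x; rewrite inE.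
move=> [[_ zA] lA mA]; split => //; first by split => // x; rewrite inE.
move=> U V [_ zU] [_ zV] e; refine (mA U V _ _ e).
  split=> // x /sA; rewrite e fs_mulE => /eqP; rewrite addn_eq0 => /andP[/eqP ? _] //.
split=> // x /sA; rewrite e fs_mulE => /eqP; rewrite addn_eq0 => /andP[_ /eqP ?] //.
Qed.

Lemma lengths_setT H0 B k : supp_in H0 B ->
  lengths [set: G] B k <-> lengths H0 B k.
Proof.
move=> sB; have sA : forall As A, B = foldr (@fs_mul G) (@fs_one G) As ->
    A \in As -> supp_in H0 A.
  move=> As A eB AAs x /sB; rewrite eB => h; apply/eqP; rewrite -leqn0.
  by rewrite -h le_foldr.
split=> [[As [sz hA eB]]|[As [sz hA eB]]]; exists As; split => // A AAs.
  rewrite -atom_setT; [exact: hA | exact: (sA As A eB AAs)].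
by rewrite atom_setT; [exact: hA | exact: (sA As A eB AAs)].
Qed.

Lemma sumn_incr (v : seq nat) i : sumn (incr_nth v i) = (sumn v).+1.
Proof.
elim: v i => [|c v IH] [|i] //=.
  by elim: i => //= i ->.
by rewrite IH addnS.
Qed.

Lemma sum_zip_incr (cs : seq nat) (cl : seq (fseq G)) i (x : G) :
  size cs = size cl -> (i < size cl)%N ->
  sumn [seq (p.1 * p.2 x)%N | p : nat * fseq G <- zip (incr_nth cs i) cl] =
  (nth (fs_one G) cl i x + sumn [seq (p.1 * p.2 x)%N | p : nat * fseq G <- zip cs cl])%N.
Proof.
elim: cl cs i => [|A cl IH] [|c cs] [|i] //= [sz] lt.
  by rewrite mulSn addnA.
by rewrite IH // addnCA.
Qed.

Lemma lengths_counts G0 (cl : seq (fseq G)) B k :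
  (forall A, atom_over G0 A -> A \in cl) -> lengths G0 B k ->
  exists cs : seq nat, [/\ size cs = size cl, k = sumn cs &
    forall x : G, B x = sumn [seq (p.1 * p.2 x)%N | p : nat * fseq G <- zip cs cl]].
Proof.
move=> hcl [As [<- hA ->]] {B k}.
elim: As hA => [|A As IH] hA.
  exists (nseq (size cl) 0%N); rewrite size_nseq; split => //.
    by elim: (size cl).
  move=> x /=; rewrite ffunE; elim: cl {hcl} => //= C cl <-; by rewrite mul0n.
have [|cs [sz ek ex]] := IH; first by move=> C CAs; apply: hA; rewrite inE CAs orbT.
have Acl : A \in cl by apply: hcl; apply: hA; rewrite inE eqxx.
exists (incr_nth cs (index A cl)); split.
- by rewrite size_incr_nth sz index_mem Acl.
- by rewrite sumn_incr -ek.
move=> x /=; rewrite fs_mulE sum_zip_incr ?index_mem // nth_index // ex //.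
Qed.

Lemma counts_lengths G0 (cl : seq (nat * fseq G)) B :
  (forall p, p \in cl -> atom_over G0 p.2) ->
  (forall x : G, B x = sumn [seq (p.1 * p.2 x)%N | p : nat * fseq G <- cl]) ->
  lengths G0 B (sumn [seq p.1 | p <- cl]).
Proof.
move=> hcl hB; exists (flatten [seq nseq p.1 p.2 | p <- cl]); split.
- rewrite size_flatten /shape -map_comp; congr sumn; apply: eq_map => p /=.
  by rewrite size_nseq.
- move=> A /flatten_mapP [p pcl]; rewrite mem_nseq => /andP[_ /eqP ->].
  exact: hcl.
apply/ffunP => x; rewrite hB foldr_fsE {hB hcl}.
elim: cl => //= p cl ->; rewrite map_cat sumn_cat; congr (_ + _)%N.
by rewrite map_nseq sumn_nseq mulnC.
Qed.

Lemma supp_mkE s S : uniq s -> supp_in [set x in s] S -> S = mk s (map S s).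
Proof.
move=> us sS; apply: (@supp_ext s) => //; first exact: supp_mk.
by rewrite mk_in // size_map.
Qed.

Lemma atom_tuple s A d : uniq s -> atom_over [set x in s] A ->
  size d = size s -> fs_sigma (mk s d) = 0 -> (0 < sumn d)%N ->
  (forall i, nth 0%N d i <= nth 0%N (map A s) i)%N -> map A s = d.
Proof.
move=> us hA sz hz hl hle.
have e : A = mk s d.
  apply: (atom_sub (D := mk s d) hA); first by split => //; apply: supp_mk.
    by rewrite len_mk.
  move=> x; case: (boolP (x \in s)) => xs; last by rewrite mk_out.
  have := hle (index x s); rewrite (nth_map x) ?index_mem // nth_index //.
  by rewrite -{1}(mk_in us sz) (nth_map x) ?index_mem // nth_index.
by rewrite e mk_in.
Qed.

Lemma tuple_atom s d : uniq s -> size d = size s ->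
  fs_sigma (mk s d) = 0 -> (0 < sumn d)%N ->
  (forall u v : seq nat, size u = size s -> size v = size s ->
     fs_sigma (mk s u) = 0 -> fs_sigma (mk s v) = 0 ->
     d = [seq (x.1 + x.2)%N | x <- zip u v] -> sumn u = 0%N \/ sumn v = 0%N) ->
  atom_over [set x in s] (mk s d).
Proof.
move=> us sz hz hl hm; split; first by split => //; apply: supp_mk.
  by rewrite len_mk.
move=> U V [sU zU] [sV zV] e.
rewrite (supp_mkE us sU) (supp_mkE us sV) !len_mk ?size_map //.
rewrite (supp_mkE us sU) in zU; rewrite (supp_mkE us sV) in zV.
apply: hm; rewrite ?size_map //.
rewrite -(mk_in us sz) e; elim: s {us sz hz hl e sU sV zU zV} => //= a s ->.
by rewrite fs_mulE.
Qed.

Lemma sum_mk_nth s (cs : seq nat) (cands : seq (seq nat)) i x0 :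
  uniq s -> all (fun c => size c == size s) cands -> (i < size s)%N ->
  sumn [seq (p.1 * p.2 (nth x0 s i))%N | p : nat * fseq G <- zip cs (map (mk s) cands)] =
  sumn [seq (p.1 * nth 0%N p.2 i)%N | p <- zip cs cands].
Proof.
move=> us; elim: cands cs => [|c cands IH] [|n cs] //= /andP[/eqP sc ac] hi.
rewrite IH //; congr (_ * _ + _)%N.
by rewrite -(nth_map x0 0%N (mk s c) hi) mk_in.
Qed.

End Gen.

Lemma mem_zip2 (T1 T2 : eqType) (l1 : seq T1) (l2 : seq T2) p :
  p \in zip l1 l2 -> p.2 \in l2.
Proof.
elim: l1 l2 => [|a t1 IH] [|b t2] //= /predU1P[->|h].
  exact: mem_head.
by apply/predU1P; right; exact: IH.
Qed.

Arguments mk : simpl never.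

Section G0side.
Variable G : finZmodType.
Variable g : G.
Hypothesis hg : has_order g 6.

Lemma g6 : g *+ 6 = 0. Proof. by case: hg. Qed.

Lemma gn0 k : (0 < k < 6)%N -> g *+ k != 0.
Proof. by case: hg => _ _; apply. Qed.

Lemma gmod n : g *+ n = g *+ (n %% 6).
Proof.
by rewrite {1}(divn_eq n 6) mulrnDr mulnC mulrnA g6 mul0rn add0r.
Qed.

Lemma gz n : g *+ n = 0 <-> (6 %| n)%N.
Proof.
rewrite gmod /dvdn; split; last by move/eqP->.
case: (n %% 6)%N (ltn_pmod n (isT : (0 < 6)%N)) => // k lk /eqP.
by rewrite (negbTE (gn0 _)).
Qed.

Lemma gneg : - g = g *+ 5.
Proof. by apply/eqP; rewrite eq_sym -subr_eq0 opprK -mulrSr g6. Qed.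

Definition s0 := [:: 0; g; g *+ 3; - g].

Lemma gneq m n : (m < n < 6)%N -> g *+ m != g *+ n.
Proof.
move=> h; rewrite eq_sym -subr_eq0 -mulrnBr; last by lia.
by apply: gn0; lia.
Qed.

Lemma s0_uniq : uniq s0.
Proof.
rewrite /s0 /= !inE !negb_or !andbT gneg -(mulr0n g).
apply/and3P; split; [apply/and3P; split|apply/andP; split|].
- exact: (@gneq 0 1).
- exact: (@gneq 0 3).
- exact: (@gneq 0 5).
- exact: (@gneq 1 3).
- exact: (@gneq 1 5).
- exact: (@gneq 3 5).
Qed.

Lemma sig0 d0 d1 d3 d5 :
  fs_sigma (mk s0 [:: d0; d1; d3; d5]) = 0 <-> (6 %| d1 + 3 * d3 + 5 * d5)%N.
Proof.
rewrite sigma_mk /= mul0rn add0r addr0 gneg -!mulrnA -!mulrnDr -gz.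
by rewrite addnA.
Qed.

Definition S0 := [set x in s0].

Definition cands0 : seq (seq nat) :=
  [:: [:: 1; 0; 0; 0]; [:: 0; 6; 0; 0]; [:: 0; 0; 0; 6]; [:: 0; 1; 0; 1];
      [:: 0; 0; 2; 0]; [:: 0; 3; 1; 0]; [:: 0; 0; 1; 3]]%N.

Lemma G0_atom A : atom_over S0 A -> map A s0 \in cands0.
Proof.
move=> hA; have [[sA zA] lA _] := hA.
have eA := supp_mkE s0_uniq sA.
have ht : map A s0 = [:: A 0; A g; A (g *+ 3); A (- g)] by [].
rewrite eA ht in zA; move/sig0: zA => dz.
rewrite eA len_mk ?size_map // ht /= in lA.
have key := fun d => atom_tuple s0_uniq hA (d := d).
rewrite ht in key *.
move: (A 0) (A g) (A (g *+ 3)) (A (- g)) dz lA key => a0 a1 a3 a5 dz lA key.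
have T : forall d, size d = 4%N -> (6 %| nth 0 d 1 + 3 * nth 0 d 2 + 5 * nth 0 d 3)%N ->
   (0 < sumn d)%N -> (forall i, nth 0 d i <= nth 0 [:: a0; a1; a3; a5] i)%N ->
   d \in cands0 -> [:: a0; a1; a3; a5] \in cands0.
  move=> [|d0 [|d1 [|d3 [|d5 [|? ?]]]]] // _ hd hs hle hc.
  by rewrite (key [:: d0; d1; d3; d5]) //; apply/sig0.
have L : forall d0 d1 d3 d5, (d0 <= a0)%N -> (d1 <= a1)%N -> (d3 <= a3)%N -> (d5 <= a5)%N ->
   forall i, (nth 0 [:: d0; d1; d3; d5] i <= nth 0 [:: a0; a1; a3; a5] i)%N.
  by move=> d0 d1 d3 d5 h0 h1 h3 h5 [|[|[|[|i]]]].
have [h0|h0] := leqP 1 a0.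
  by apply: (T [:: 1; 0; 0; 0]%N) => //; apply: L.
have [h1|h1] := leqP 1 a1; have [h5|h5] := leqP 1 a5.
- by apply: (T [:: 0; 1; 0; 1]%N) => //; apply: L.
- have [h3|h3] := leqP 2 a3.
    by apply: (T [:: 0; 0; 2; 0]%N) => //; apply: L.
  have [h6|h6] := leqP 6 a1.
    by apply: (T [:: 0; 6; 0; 0]%N) => //; apply: L.
  have [h31|h31] := leqP 3 a1; have [h33|h33] := leqP 1 a3.
  + by apply: (T [:: 0; 3; 1; 0]%N) => //; apply: L.
  + exfalso; lia.
  + exfalso; lia.
  + exfalso; lia.
- have [h3|h3] := leqP 2 a3.
    by apply: (T [:: 0; 0; 2; 0]%N) => //; apply: L.
  have [h6|h6] := leqP 6 a5.
    by apply: (T [:: 0; 0; 0; 6]%N) => //; apply: L.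
  have [h31|h31] := leqP 3 a5; have [h33|h33] := leqP 1 a3.
  + by apply: (T [:: 0; 0; 1; 3]%N) => //; apply: L.
  + exfalso; lia.
  + exfalso; lia.
  + exfalso; lia.
- have [h3|h3] := leqP 2 a3.
    by apply: (T [:: 0; 0; 2; 0]%N) => //; apply: L.
  exfalso; lia.
Qed.

Section MkE.
Variables c0 c1 c3 c5 : nat.
Let E := mk_in s0_uniq (erefl 4%N : size [:: c0; c1; c3; c5] = size s0).
Lemma mkE0 : mk s0 [:: c0; c1; c3; c5] 0 = c0. Proof. by case: E. Qed.
Lemma mkE1 : mk s0 [:: c0; c1; c3; c5] g = c1. Proof. by case: E. Qed.
Lemma mkE3 : mk s0 [:: c0; c1; c3; c5] (g *+ 3) = c3. Proof. by case: E. Qed.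
Lemma mkE5 : mk s0 [:: c0; c1; c3; c5] (- g) = c5. Proof. by case: E. Qed.
End MkE.

Lemma G0_cand4 c0 c1 c3 c5 : (6 %| c1 + 3 * c3 + 5 * c5)%N -> (0 < c0 + c1 + c3 + c5)%N ->
  (forall u0 u1 u3 u5 v0 v1 v3 v5 : nat,
     (6 %| u1 + 3 * u3 + 5 * u5)%N -> (6 %| v1 + 3 * v3 + 5 * v5)%N ->
     c0 = (u0 + v0)%N -> c1 = (u1 + v1)%N -> c3 = (u3 + v3)%N -> c5 = (u5 + v5)%N ->
     (u0 + u1 + u3 + u5 = 0)%N \/ (v0 + v1 + v3 + v5 = 0)%N) ->
  atom_over S0 (mk s0 [:: c0; c1; c3; c5]).
Proof.
move=> hd hs hm; apply: tuple_atom s0_uniq _ _ _ _ => //.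
- by apply/sig0.
- by rewrite /= addn0 !addnA.
move=> [|u0 [|u1 [|u3 [|u5 [|? ?]]]]] // [|v0 [|v1 [|v3 [|v5 [|? ?]]]]] // _ _.
move=> /sig0 hu /sig0 hv [e0 e1 e3 e5] /=.
rewrite !addn0 !addnA; exact: hm.
Qed.

Definition cl0 := map (mk s0) cands0.

Lemma G0_cands A : A \in cl0 -> atom_over S0 A.
Proof.
rewrite /cl0 /cands0 /= !inE.
by do ! (case/orP; first by move/eqP->; apply: G0_cand4 => //= *; lia);
   move/eqP->; apply: G0_cand4 => //= *; lia.
Qed.

Lemma G0_atom_in A : atom_over S0 A -> A \in cl0.
Proof.
move=> hA; have [[sA _] _ _] := hA.
by rewrite (supp_mkE s0_uniq sA); apply: map_f; apply: G0_atom.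
Qed.

Lemma S0E x : (x \in S0) = (x \in s0).
Proof. by rewrite inE. Qed.

Lemma G0_lengths B k : zero_sum_over S0 B ->
  lengths S0 B k <-> exists c1 c2 c3 c4 c5 c6 c7 : nat,
    [/\ B 0 = c1, B g = (6 * c2 + c4 + 3 * c6)%N,
        B (g *+ 3) = (2 * c5 + c6 + c7)%N, B (- g) = (6 * c3 + c4 + 3 * c7)%N &
        k = (c1 + c2 + c3 + c4 + c5 + c6 + c7)%N].
Proof.
move=> [sB _]; split.
  move=> /(lengths_counts G0_atom_in) [cs [sz ek ex]].
  move: cs sz ek ex => [|c1 [|c2 [|c3 [|c4 [|c5 [|c6 [|c7 [|? ?]]]]]]]] // _ ek ex.
  exists c1, c2, c3, c4, c5, c6, c7.
  rewrite !ex /= ?mkE0 ?mkE1 ?mkE3 ?mkE5 ek /=; split; lia.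
move=> [c1 [c2 [c3 [c4 [c5 [c6 [c7 [e0 e1 e3 e5 ->]]]]]]]].
pose cl := [:: (c1, mk s0 [:: 1; 0; 0; 0]); (c2, mk s0 [:: 0; 6; 0; 0]);
  (c3, mk s0 [:: 0; 0; 0; 6]); (c4, mk s0 [:: 0; 1; 0; 1]);
  (c5, mk s0 [:: 0; 0; 2; 0]); (c6, mk s0 [:: 0; 3; 1; 0]); (c7, mk s0 [:: 0; 0; 1; 3])]%N.
have -> : (c1 + c2 + c3 + c4 + c5 + c6 + c7)%N = sumn [seq p.1 | p <- cl].
  by rewrite /= addn0 !addnA.
apply: counts_lengths.
  move=> p; rewrite !inE => hp; apply: G0_cands; rewrite /cl0 /cands0 /=.
  by move: hp; rewrite !inE; do ! (case/orP; first by move/eqP->; rewrite eqxx ?orbT);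
     move/eqP->; rewrite eqxx ?orbT.
move=> x; case: (boolP (x \in s0)) => xs.
  move: xs; rewrite !inE => /orP[/eqP->|/orP[/eqP->|/orP[/eqP->|/eqP->]]] /=;
  rewrite ?mkE0 ?mkE1 ?mkE3 ?mkE5 ?e0 ?e1 ?e3 ?e5; lia.
rewrite sB ?S0E // /cl /=.
rewrite !(mk_out _ xs).
by rewrite !muln0.
Qed.

End G0side.

Section C2side.
Definition V := C2 5.
Definition o (k : nat) : 'I_5 := inord k.
Definition e (k : nat) : V := locked (delta_mx 0 (o k)).
Definition sv : V := e 0 + e 1 + e 2 + e 3 + e 4.
Definition yv : V := e 0 + e 1 + e 2.
Definition hs : seq V := [:: 0; e 0; e 1; e 2; e 3; e 4; sv; yv].

Lemma ent_mulrn (x : V) n j : (x *+ n) 0 j = x 0 j *+ n.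
Proof. elim: n => [|n IH]; by rewrite ?mulr0n ?mxE // !mulrS mxE IH. Qed.

Lemma ent_add (x y : V) j : (x + y) 0 j = x 0 j + y 0 j.
Proof. by rewrite mxE. Qed.

Lemma ent0 j : (0 : V) 0 j = 0.
Proof. by rewrite mxE. Qed.

Lemma ente k j : (k < 5)%N -> (j < 5)%N -> e k 0 (o j) = (k == j)%:R.
Proof.
move=> hk hj; rewrite /e -lock mxE /o eqxx /= eq_sym -(inj_eq val_inj) /= !inordK //.
Qed.

Lemma F2z n : ((n%:R : 'F_2) = 0) <-> (2 %| n)%N.
Proof.
split => [h|h].
  have := congr1 (fun z : 'F_2 => nat_of_ord z) h; rewrite /= val_Fp_nat //.
  by move=> h2; apply/eqP.
by apply: ord_inj; rewrite val_Fp_nat //= (eqP h).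
Qed.

Lemma row0P (v : V) : v = 0 <-> forall j, (j < 5)%N -> v 0 (o j) = 0.
Proof.
split => [->|h]; first by move=> j _; rewrite mxE.
apply/rowP => j; rewrite mxE; have := h j (ltn_ord j).
by rewrite /o inord_val.
Qed.

Section Sig.
Variables m0 m1 m2 m3 m4 m5 m6 m7 : nat.
Let v := fs_sigma (mk hs [:: m0; m1; m2; m3; m4; m5; m6; m7]).
Ltac ent := rewrite /v sigma_mk /= /sv /yv !(ent_add, ent_mulrn, ent0) !ente //=;
  idtac.
Lemma v0 : v 0 (o 0) = (m1 + m6 + m7)%:R.
Proof. ent; ring. Qed.
Lemma v1 : v 0 (o 1) = (m2 + m6 + m7)%:R.
Proof. ent; ring. Qed.
Lemma v2 : v 0 (o 2) = (m3 + m6 + m7)%:R.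
Proof. ent; ring. Qed.
Lemma v3 : v 0 (o 3) = (m4 + m6)%:R.
Proof. ent; ring. Qed.
Lemma v4 : v 0 (o 4) = (m5 + m6)%:R.
Proof. ent; ring. Qed.

Lemma sigC2 : v = 0 <->
  [/\ (2 %| m1 + m6 + m7)%N, (2 %| m2 + m6 + m7)%N, (2 %| m3 + m6 + m7)%N,
      (2 %| m4 + m6)%N & (2 %| m5 + m6)%N].
Proof.
rewrite row0P; split.
  move=> h; split; apply/F2z; [rewrite -v0|rewrite -v1|rewrite -v2|rewrite -v3|rewrite -v4];
  exact: h.
move=> [h0 h1 h2 h3 h4] [|[|[|[|[|j]]]]] // _;
  [rewrite v0|rewrite v1|rewrite v2|rewrite v3|rewrite v4]; exact/F2z.
Qed.
End Sig.

Definition sig (x : V) : seq 'F_2 := [seq x 0 (o j) | j <- iota 0 5].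

Lemma sig_hs : map sig hs =
  [:: [:: 0; 0; 0; 0; 0]; [:: 1; 0; 0; 0; 0]; [:: 0; 1; 0; 0; 0];
      [:: 0; 0; 1; 0; 0]; [:: 0; 0; 0; 1; 0]; [:: 0; 0; 0; 0; 1];
      [:: 1; 1; 1; 1; 1]; [:: 1; 1; 1; 0; 0]].
Proof.
rewrite /= /sig /= /sv /yv !(ent_add, ent0) !ente //=.
by rewrite ?mulr0n ?mulr1n ?addr0 ?add0r.
Qed.

Lemma hs_uniq : uniq hs.
Proof. apply: (map_uniq (f := sig)); rewrite sig_hs; by vm_compute. Qed.

Definition H0 := [set x in hs].

Definition candsH : seq (seq nat) :=
  [:: [:: 1; 0; 0; 0; 0; 0; 0; 0]; [:: 0; 2; 0; 0; 0; 0; 0; 0];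
      [:: 0; 0; 2; 0; 0; 0; 0; 0]; [:: 0; 0; 0; 2; 0; 0; 0; 0];
      [:: 0; 0; 0; 0; 2; 0; 0; 0]; [:: 0; 0; 0; 0; 0; 2; 0; 0];
      [:: 0; 0; 0; 0; 0; 0; 2; 0]; [:: 0; 0; 0; 0; 0; 0; 0; 2];
      [:: 0; 1; 1; 1; 1; 1; 1; 0]; [:: 0; 1; 1; 1; 0; 0; 0; 1];
      [:: 0; 0; 0; 0; 1; 1; 1; 1]]%N.

Definition par (a1 a2 a3 a4 a5 a6 a7 : nat) : Prop :=
  [/\ (2 %| a1 + a6 + a7)%N, (2 %| a2 + a6 + a7)%N, (2 %| a3 + a6 + a7)%N,
      (2 %| a4 + a6)%N & (2 %| a5 + a6)%N].

Lemma sigH d0 d1 d2 d3 d4 d5 d6 d7 :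
  fs_sigma (mk hs [:: d0; d1; d2; d3; d4; d5; d6; d7]) = 0 <-> par d1 d2 d3 d4 d5 d6 d7.
Proof. exact: sigC2. Qed.

Lemma H_atom A : atom_over H0 A -> map A hs \in candsH.
Proof.
move=> hA; have [[sA zA] lA _] := hA.
have eA := supp_mkE hs_uniq sA.
have ht : map A hs = [:: A 0; A (e 0); A (e 1); A (e 2); A (e 3); A (e 4); A sv; A yv] by [].
rewrite eA ht in zA; move/sigH: zA => dz.
rewrite eA len_mk ?size_map // ht /= in lA.
have key := fun d => atom_tuple hs_uniq hA (d := d).
rewrite ht in key *.
move: (A 0) (A (e 0)) (A (e 1)) (A (e 2)) (A (e 3)) (A (e 4)) (A sv) (A yv) dz lA key
  => a0 a1 a2 a3 a4 a5 a6 a7 [p1 p2 p3 p4 p5] lA key.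
have T : forall d0 d1 d2 d3 d4 d5 d6 d7, par d1 d2 d3 d4 d5 d6 d7 ->
   (0 < d0 + d1 + d2 + d3 + d4 + d5 + d6 + d7)%N ->
   (d0 <= a0)%N -> (d1 <= a1)%N -> (d2 <= a2)%N -> (d3 <= a3)%N ->
   (d4 <= a4)%N -> (d5 <= a5)%N -> (d6 <= a6)%N -> (d7 <= a7)%N ->
   [:: d0; d1; d2; d3; d4; d5; d6; d7] \in candsH ->
   [:: a0; a1; a2; a3; a4; a5; a6; a7] \in candsH.
  move=> d0 d1 d2 d3 d4 d5 d6 d7 hp hs h0 h1 h2 h3 h4 h5 h6 h7 hc.
  rewrite (key [:: d0; d1; d2; d3; d4; d5; d6; d7]) //.
  - by apply/sigH.
  - by rewrite /= addn0 !addnA.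
  by case=> [|[|[|[|[|[|[|[|i]]]]]]]].
have [h|h] := leqP 1 a0.
  by apply: (T 1 0 0 0 0 0 0 0)%N => //; split.
have [h1|h1] := leqP 2 a1.
  by apply: (T 0 2 0 0 0 0 0 0)%N => //; split.
have [h2|h2] := leqP 2 a2.
  by apply: (T 0 0 2 0 0 0 0 0)%N => //; split.
have [h3|h3] := leqP 2 a3.
  by apply: (T 0 0 0 2 0 0 0 0)%N => //; split.
have [h4|h4] := leqP 2 a4.
  by apply: (T 0 0 0 0 2 0 0 0)%N => //; split.
have [h5|h5] := leqP 2 a5.
  by apply: (T 0 0 0 0 0 2 0 0)%N => //; split.
have [h6|h6] := leqP 2 a6.
  by apply: (T 0 0 0 0 0 0 2 0)%N => //; split.
have [h7|h7] := leqP 2 a7.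
  by apply: (T 0 0 0 0 0 0 0 2)%N => //; split.
have : [\/ [:: a0; a1; a2; a3; a4; a5; a6; a7] = [:: 0; 1; 1; 1; 1; 1; 1; 0]%N,
           [:: a0; a1; a2; a3; a4; a5; a6; a7] = [:: 0; 1; 1; 1; 0; 0; 0; 1]%N |
           [:: a0; a1; a2; a3; a4; a5; a6; a7] = [:: 0; 0; 0; 0; 1; 1; 1; 1]%N].
  have {}h : a0 = 0%N by lia.
  have : (a1 = 1 /\ a2 = 1 /\ a3 = 1 /\ a4 = 1 /\ a5 = 1 /\ a6 = 1 /\ a7 = 0)%N \/
         (a1 = 1 /\ a2 = 1 /\ a3 = 1 /\ a4 = 0 /\ a5 = 0 /\ a6 = 0 /\ a7 = 1)%N \/
         (a1 = 0 /\ a2 = 0 /\ a3 = 0 /\ a4 = 1 /\ a5 = 1 /\ a6 = 1 /\ a7 = 1)%N by lia.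
  rewrite h; case=> [[-> [-> [-> [-> [-> [-> ->]]]]]]|
    [[-> [-> [-> [-> [-> [-> ->]]]]]]|[-> [-> [-> [-> [-> [-> ->]]]]]]]].
  - by apply: Or31.
  - by apply: Or32.
  - by apply: Or33.
by case=> ->.
Qed.

Lemma H_cand8 c0 c1 c2 c3 c4 c5 c6 c7 : par c1 c2 c3 c4 c5 c6 c7 ->
  (0 < c0 + c1 + c2 + c3 + c4 + c5 + c6 + c7)%N ->
  (forall u0 u1 u2 u3 u4 u5 u6 u7 v0 v1 v2 v3 v4 v5 v6 v7 : nat,
     par u1 u2 u3 u4 u5 u6 u7 -> par v1 v2 v3 v4 v5 v6 v7 ->
     c0 = (u0 + v0)%N -> c1 = (u1 + v1)%N -> c2 = (u2 + v2)%N -> c3 = (u3 + v3)%N ->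
     c4 = (u4 + v4)%N -> c5 = (u5 + v5)%N -> c6 = (u6 + v6)%N -> c7 = (u7 + v7)%N ->
     (u0 + u1 + u2 + u3 + u4 + u5 + u6 + u7 = 0)%N \/
     (v0 + v1 + v2 + v3 + v4 + v5 + v6 + v7 = 0)%N) ->
  atom_over H0 (mk hs [:: c0; c1; c2; c3; c4; c5; c6; c7]).
Proof.
move=> hd hsum hm; apply: tuple_atom hs_uniq _ _ _ _ => //.
- by apply/sigH.
- by rewrite /= addn0 !addnA.
move=> [|u0 [|u1 [|u2 [|u3 [|u4 [|u5 [|u6 [|u7 [|? ?]]]]]]]]] //
       [|v0 [|v1 [|v2 [|v3 [|v4 [|v5 [|v6 [|v7 [|? ?]]]]]]]]] // _ _.
move=> /sigH hu /sigH hv [e0 e1 e2 e3 e4 e5 e6 e7] /=.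
rewrite !addn0 !addnA; exact: hm.
Qed.

Definition clH := map (mk hs) candsH.

Ltac hcand := apply: H_cand8; [by rewrite /par; split | by [] |
  move=> u0 u1 u2 u3 u4 u5 u6 u7 v0 v1 v2 v3 v4 v5 v6 v7 [? ? ? ? ?] [? ? ? ? ?] *; lia].

Lemma H_cands A : A \in clH -> atom_over H0 A.
Proof.
rewrite /clH /candsH /= !inE.
by do ! (case/orP; first by move/eqP->; hcand); move/eqP->; hcand.
Qed.

Lemma H_atom_in A : atom_over H0 A -> A \in clH.
Proof.
move=> hA; have [[sA _] _ _] := hA.
by rewrite (supp_mkE hs_uniq sA); apply: map_f; apply: H_atom.
Qed.

Section MkH.
Variables c0 c1 c2 c3 c4 c5 c6 c7 : nat.
Let E := mk_in hs_uniq (erefl 8%N : size [:: c0; c1; c2; c3; c4; c5; c6; c7] = size hs).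
Let M := mk hs [:: c0; c1; c2; c3; c4; c5; c6; c7].
Lemma mkH0 : M 0 = c0. Proof. by case: E. Qed.
Lemma mkH1 : M (e 0) = c1. Proof. by case: E. Qed.
Lemma mkH2 : M (e 1) = c2. Proof. by case: E. Qed.
Lemma mkH3 : M (e 2) = c3. Proof. by case: E. Qed.
Lemma mkH4 : M (e 3) = c4. Proof. by case: E. Qed.
Lemma mkH5 : M (e 4) = c5. Proof. by case: E. Qed.
Lemma mkH6 : M sv = c6. Proof. by case: E. Qed.
Lemma mkH7 : M yv = c7. Proof. by case: E. Qed.
End MkH.

Lemma H_lengths B k : supp_in H0 B ->
  lengths H0 B k <-> exists z c1 c2 c3 c4 c5 c6 c7 al be ga : nat,
    [/\ B 0 = z, B (e 0) = (2 * c1 + al + be)%N, B (e 1) = (2 * c2 + al + be)%N,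
        B (e 2) = (2 * c3 + al + be)%N & B (e 3) = (2 * c4 + al + ga)%N] /\
    [/\ B (e 4) = (2 * c5 + al + ga)%N, B sv = (2 * c6 + al + ga)%N,
        B yv = (2 * c7 + be + ga)%N &
        k = (z + c1 + c2 + c3 + c4 + c5 + c6 + c7 + al + be + ga)%N].
Proof.
move=> sB; have acands : all (fun c => size c == size hs) candsH by [].
split.
  move=> /(lengths_counts H_atom_in) [cs [sz ek ex]].
  have ev : forall i, (i < 8)%N ->
      B (nth 0 hs i) = sumn [seq (p.1 * nth 0%N p.2 i)%N | p <- zip cs candsH].
    by move=> i hi; rewrite ex /clH sum_mk_nth //; exact: hs_uniq.
  have h0 := ev 0%N isT; have h1 := ev 1%N isT; have h2 := ev 2%N isT.
  have h3 := ev 3%N isT; have h4 := ev 4%N isT; have h5 := ev 5%N isT.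
  have h6 := ev 6%N isT; have h7 := ev 7%N isT.
  move: cs sz ek h0 h1 h2 h3 h4 h5 h6 h7 {ev ex} =>
    [|z [|c1 [|c2 [|c3 [|c4 [|c5 [|c6 [|c7 [|al [|be [|ga [|? ?]]]]]]]]]]]] //= _ ek
    h0 h1 h2 h3 h4 h5 h6 h7.
  exists z, c1, c2, c3, c4, c5, c6, c7, al, be, ga.
  rewrite h0 h1 h2 h3 h4 h5 h6 h7 ek; split; split; lia.
move=> [z [c1 [c2 [c3 [c4 [c5 [c6 [c7 [al [be [ga [[e0 e1 e2 e3 e4] [e5 e6 e7 ->]]]]]]]]]]]]].
pose cs := [:: z; c1; c2; c3; c4; c5; c6; c7; al; be; ga].
have -> : (z + c1 + c2 + c3 + c4 + c5 + c6 + c7 + al + be + ga)%N =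
    sumn [seq p.1 | p <- zip cs clH].
  by rewrite /= addn0 !addnA.
apply: counts_lengths.
  by move=> p /mem_zip2 /H_cands.
move=> x; case: (boolP (x \in hs)) => xs.
  rewrite -(nth_index 0 xs) /clH sum_mk_nth ?index_mem //; last exact: hs_uniq.
  move: (index_mem x hs); rewrite xs; move: (index x hs) => i.
  case: i => [|[|[|[|[|[|[|[|i]]]]]]]] //= _;
  rewrite ?e0 ?e1 ?e2 ?e3 ?e4 ?e5 ?e6 ?e7; lia.
by rewrite /cs /clH /= !mk_out // !muln0 sB // inE.
Qed.



End C2side.

Lemma lengthsB' K p q r k :
  lengths [set: C2 5] (mk hs [:: K; p; p; p; q; q; q; r]) k <-> ArQ K p q r k.
Proof.
have m0 := mkH0 K p p p q q q r; have m1 := mkH1 K p p p q q q r.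
have m2 := mkH2 K p p p q q q r; have m3 := mkH3 K p p p q q q r.
have m4 := mkH4 K p p p q q q r; have m5 := mkH5 K p p p q q q r.
have m6 := mkH6 K p p p q q q r; have m7 := mkH7 K p p p q q q r.
have sB := @supp_mk V hs [:: K; p; p; p; q; q; q; r].
rewrite (lengths_setT k sB) (H_lengths k sB); split.
  move=> [z [c1 [c2 [c3 [c4 [c5 [c6 [c7 [al [be [ga [[e0 e1 e2 e3 e4] [e5 e6 e7 ->]]]]]]]]]]]]].
  exists z, c1, c2, c3, c4, c5, c6, c7, al, be, ga; split; split; lia.
move=> [z [c1 [c2 [c3 [c4 [c5 [c6 [c7 [al [be [ga [[e0 e1 e2 e3 e4] [e5 e6 e7 ->]]]]]]]]]]]]].
exists z, c1, c2, c3, c4, c5, c6, c7, al, be, ga; split; split; lia.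
Qed.

Lemma zsB' K p q r : (2 %| p + q + r)%N ->
  zero_sum_over [set: C2 5] (mk hs [:: K; p; p; p; q; q; q; r]).
Proof.
move=> h; split; first by move=> x; rewrite inE.
by apply/sigH; split; lia.
Qed.

Theorem lemma3p14 (G : finZmodType) (g : G) :
  has_order g 6 ->
  system_subset [set 0; g; g *+ 3; - g] [set: C2 5].
Proof.
move=> hg L [B [zB HL]].
have eS : [set 0; g; g *+ 3; - g] = S0 g.
  by apply/setP => x; rewrite !inE -!orbA.
rewrite eS in zB HL.
have hd : (6 %| B g + 3 * B (g *+ 3) + 5 * B (- g))%N.
  case: zB => sB sg; rewrite (supp_mkE (s0_uniq hg) sB) in sg.
  exact: (proj1 (sig0 hg _ _ _ _) sg).
have HP : forall k, L k <-> ArP (B 0) (B g) (B (g *+ 3)) (B (- g)) k.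
  by move=> k; rewrite HL; exact: G0_lengths.
move: HP hd; move: (B 0) (B g) (B (g *+ 3)) (B (- g)) => K a b c HP hd.
case: (posnP b) => [b0|bpos].
  subst b.
  pose r6 := (a %% 6)%N; pose n0 := (K + (a + c + 4 * r6) %/ 6)%N.
  pose T := ((minn a c - r6) %/ 6)%N.
  exists (mk hs [:: n0 - 2 * T; 2 * T; 2 * T; 2 * T; 2 * T; 2 * T; 2 * T; 0])%N; split.
    by apply: zsB'; lia.
  move=> k; rewrite HP lengthsB' Q_r0 P_b0; last by lia.
  have -> : (n0 - 2 * T + 2 * T = K + (a + c + 4 * (a %% 6)) %/ 6)%N by rewrite /n0 /T /r6; lia.
  by [].
pose r3 := (a %% 3)%N; pose n0 := (K + (a + c + 3 * b + 4 * r3) %/ 6)%N.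
pose T := ((minn a c - r3) %/ 3)%N.
exists (mk hs [:: n0 - T - 1; T + T %% 2; T + T %% 2; T + T %% 2;
                  T - T %% 2; T - T %% 2; T - T %% 2; 2])%N; split.
  by apply: zsB'; lia.
move=> k; rewrite HP lengthsB' Q_r2 P_b1 //.
have -> : (n0 - T - 1 + T + 1 = K + (a + c + 3 * b + 4 * (a %% 3)) %/ 6)%N.
  by rewrite /n0 /T /r3; lia.
by [].
Qed.
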